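(* Let $n\ge1$, $k\ge0$ be integers and define the $n\times n$ matrices $M_1(n,k)=\big(\mathcal P^+_{i+j+1}(k,0)\big)_{0\le i,j\le n-1}$ and $MP_1(n,k)=\big(\sum_{l\ge0}\mathcal P^+_{i+j+1}(k,l)\big)_{0\le i,j\le n-1}$. Then $$A(n)\cdot MP_1(n,k)=M_1(n,k)+C_1(n,k),$$ where $C_1(n,k)=(C_{i,j})_{0\le i,j\le n-1}$ has $C_{i,j}=0$ for $i\le n-2$ and $C_{n-1,j}=(xy)^{n-1}\sum_{l\ge0}\mathcal P_{j+1}(0,n-k+l)$.
   Context: Three-step paths consist of up-steps $(1,1)$, level steps $(1,0)$ and down-steps $(1,-1)$. Weights: $w((1,1))=1$, $w((1,0))=x+y$, $w((1,-1))=xy$; a path's weight is the product of its step weights. $\mathcal P_n(k,l)$ is the sum of weights of all three-step paths from $(0,k)$ to $(n,l)$; $\mathcal P^+_n(k,l)$ the same restricted to paths never running below the $x$-axis. The matrix $A(n)=(A_{n,i,j})_{0\le i,j\le n-1}$ is defined by $A_{n,i,j}=\frac{(1+x)(1+y)}{xy}$ if $i=j<n-1$; $-\frac1{xy}$ if $i=j-1<n-1$; $A_{n,n-1,n-1}=\frac{xy-(n-1)(x+y)}{xy}$; for $j<n-1$, $$A_{n,n-1,j}=\frac{(-1)^{n+j}}{xy}\sum_{l=j}^{n}\left(\binom lj\binom{n+j-1-l}{j}x^{l-j}y^{n-1-l}+\binom lj\binom{n+j-l}{j}x^{l-j}y^{n-l}\right);$$ and $0$ otherwise (binomial coefficients $\binom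 ab=0$ if $b<0$ or $a<b$). *)

(* Defs.v *)
(* x, y are taken as nonzero elements of an arbitrary field R
   (the paper's formal variables). *)
From HB Require Import structures.
From mathcomp Require Import all_boot all_order all_algebra.
Set Implicit Arguments. Unset Strict Implicit. Unset Printing Implicit Defensive.
Import Order.TTheory GRing.Theory Num.Theory.
Local Open Scope ring_scope.

Section Paths.
Variables (R : fieldType) (x y : R).

(* steps encoded by 'I_3 : 0 = down (1,-1), 1 = level (1,0), 2 = up (1,1) *)
Definition step (s : 'I_3) : int := (nat_of_ord s)%:Z - 1.
Definition stepw (s : 'I_3) : R :=
  if nat_of_ord s == 0%N then x * y else if nat_of_ord s == 1%N then x + y else 1.

Definition height (m : nat) (a : int) (t : {ffun 'I_m -> 'I_3}) (j : nat) : int :=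
  a + \sum_(i < m | (i < j)%N) step (t i).

Definition pathw (m : nat) (t : {ffun 'I_m -> 'I_3}) : R := \prod_(i < m) stepw (t i).

Definition Pw (m : nat) (a b : int) : R :=
  \sum_(t : {ffun 'I_m -> 'I_3} | height a t m == b) pathw t.

Definition Ppos (m : nat) (a b : int) : R :=
  \sum_(t : {ffun 'I_m -> 'I_3} |
          (height a t m == b) && [forall j : 'I_m.+1, (0 <= height a t j)%R]) pathw t.

(* \sum_{l >= 0} f m a (c + l), for f = Pw or Ppos. Paths of length m from a end
   at height <= a + m, so only l <= a - c + m contribute: the truncation below
   at l <= m + |a - c| is exact. *)
Definition sumPw (m : nat) (a c : int) : R :=
  \sum_(l < (m + `|a - c|).+1) Pw m a (c + l%:Z).
Definition sumPpos (m : nat) (a c : int) : R :=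
  \sum_(l < (m + `|a - c|).+1) Ppos m a (c + l%:Z).

Definition binz (a : int) (b : nat) : R :=
  match a with Posz a' => ('C(a', b))%:R | Negz _ => 0 end.

Definition Alast (n j : nat) : R :=
  (-1) ^+ (n + j) / (x * y) *
  \sum_(j <= l < n.+1)
     (binz l%:Z j * binz (n%:Z + j%:Z - 1 - l%:Z) j * x ^+ (l - j) * y ^ (n%:Z - 1 - l%:Z)
    + binz l%:Z j * binz (n%:Z + j%:Z - l%:Z) j * x ^+ (l - j) * y ^ (n%:Z - l%:Z)).

Definition Amx (n : nat) : 'M[R]_n :=
  \matrix_(i < n, j < n)
    if (i == j :> nat) && (i < n.-1)%N then (1 + x) * (1 + y) / (x * y)
    else if (i.+1 == j :> nat) && (i < n.-1)%N then - 1 / (x * y)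
    else if (i == n.-1 :> nat) && (j == n.-1 :> nat) then (x * y - (n.-1)%:R * (x + y)) / (x * y)
    else if (i == n.-1 :> nat) && (j < n.-1)%N then Alast n j
    else 0.

Definition M1 (n k : nat) : 'M[R]_n :=
  \matrix_(i < n, j < n) Ppos (i + j).+1 k%:Z 0.

Definition MP1 (n k : nat) : 'M[R]_n :=
  \matrix_(i < n, j < n) sumPpos (i + j).+1 k%:Z 0.

Definition C1 (n k : nat) : 'M[R]_n :=
  \matrix_(i < n, j < n)
    if (i < n.-1)%N then 0
    else (x * y) ^+ n.-1 * sumPw j.+1 0 (n%:Z - k%:Z).

End Paths.

(* Main.v *)
Require Import Defs.
From HB Require Import structures.
From mathcomp Require Import all_boot all_order all_algebra.
From mathcomp Require Import zify ring.
From Stdlib Require Import FunctionalExtensionality.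
Set Implicit Arguments. Unset Strict Implicit. Unset Printing Implicit Defensive.
Import Order.TTheory GRing.Theory Num.Theory.
Local Open Scope ring_scope.

Section Comb.
Variables (R : fieldType) (x y : R).

Definition fcons m (s : 'I_3) (u : {ffun 'I_m -> 'I_3}) : {ffun 'I_m.+1 -> 'I_3} :=
  [ffun i => if unlift ord0 i is Some j then u j else s].
Definition ftl m (t : {ffun 'I_m.+1 -> 'I_3}) : {ffun 'I_m -> 'I_3} :=
  [ffun j => t (lift ord0 j)].

Lemma fcons0 m s (u : {ffun 'I_m -> 'I_3}) : fcons s u ord0 = s.
Proof. by rewrite ffunE unlift_none. Qed.

Lemma fconsS m s (u : {ffun 'I_m -> 'I_3}) j : fcons s u (lift ord0 j) = u j.
Proof. by rewrite ffunE liftK. Qed.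

Lemma fcons_ftl m (t : {ffun 'I_m.+1 -> 'I_3}) : fcons (t ord0) (ftl t) = t.
Proof.
apply/ffunP=> i; rewrite ffunE; case: unliftP => [j ->|->] //.
by rewrite ffunE.
Qed.

Lemma sum_fcons m (F : {ffun 'I_m.+1 -> 'I_3} -> R) :
  \sum_t F t = \sum_(s : 'I_3) \sum_(u : {ffun 'I_m -> 'I_3}) F (fcons s u).
Proof.
rewrite pair_big /=.
rewrite (reindex (fun p : 'I_3 * {ffun 'I_m -> 'I_3} => fcons p.1 p.2)) //.
exists (fun t : {ffun 'I_m.+1 -> 'I_3} => (t ord0, ftl t)) => [[s u] _|t _] /=; last exact: fcons_ftl.
congr pair; first exact: fcons0.
by apply/ffunP=> j; rewrite ffunE fconsS.
Qed.

Lemma heightE m (a : int) (t : {ffun 'I_m -> 'I_3}) j :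
  height a t j = a + \sum_(i < m | (i < j)%N) step (t i).
Proof. by []. Qed.

Lemma pathwE m (t : {ffun 'I_m -> 'I_3}) : pathw x y t = \prod_(i < m) stepw x y (t i).
Proof. by []. Qed.

Lemma height0 m a (t : {ffun 'I_m -> 'I_3}) : height a t 0 = a.
Proof. by rewrite heightE big_pred0 ?addr0. Qed.

Lemma heightS m a s (u : {ffun 'I_m -> 'I_3}) j :
  height a (fcons s u) j.+1 = height (a + step s) u j.
Proof.
rewrite !heightE [in LHS]big_mkcond big_ord_recl fcons0 [in RHS]big_mkcond -addrA.
congr (_ + (_ + _)).
by apply: eq_bigr => i _; rewrite lift0 ltnS fconsS.
Qed.

Lemma pathw_fcons m s (u : {ffun 'I_m -> 'I_3}) :
  pathw x y (fcons s u) = stepw x y s * pathw x y u.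
Proof.
rewrite !pathwE big_ord_recl fcons0; congr (_ * _).
by apply: eq_bigr => i _; rewrite fconsS.
Qed.


Lemma forall_fcons m a s (u : {ffun 'I_m -> 'I_3}) :
  [forall j : 'I_m.+2, 0 <= height a (fcons s u) j] =
  (0 <= a) && [forall j : 'I_m.+1, 0 <= height (a + step s) u j].
Proof.
apply/forallP/andP => [H|[Ha /forallP H] j].
  split; first by have := H ord0; rewrite height0.
  by apply/forallP => j; have := H (lift ord0 j); rewrite lift0 heightS.
case: j => [[|j] Hj] /=; first by rewrite height0.
by rewrite heightS; apply: (H (Ordinal (Hj : (j < m.+1)%N))).
Qed.

Lemma PposE m a b : Ppos x y m a b = \sum_(t : {ffun 'I_m -> 'I_3} |
          (height a t m == b) && [forall j : 'I_m.+1, (0 <= height a t j)%R]) pathw x y t.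
Proof. by []. Qed.

Lemma PwE m a b : Pw x y m a b = \sum_(t : {ffun 'I_m -> 'I_3} | height a t m == b) pathw x y t.
Proof. by []. Qed.

Lemma sum_I3 (F : 'I_3 -> R) : \sum_(s : 'I_3) F s =
  F (inord 0) + F (inord 1) + F (inord 2).
Proof.
rewrite !big_ord_recl big_ord0 addr0 addrA; congr (_ + _ + _); congr F; apply/val_inj;
by rewrite /= inordK.
Qed.

Lemma step0 : step (inord 0 : 'I_3) = -1. Proof. by rewrite /step inordK. Qed.
Lemma step1 : step (inord 1 : 'I_3) = 0. Proof. by rewrite /step inordK. Qed.
Lemma step2 : step (inord 2 : 'I_3) = 1. Proof. by rewrite /step inordK. Qed.
Lemma stepw0 : stepw x y (inord 0 : 'I_3) = x * y. Proof. by rewrite /stepw inordK. Qed.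
Lemma stepw1 : stepw x y (inord 1 : 'I_3) = x + y. Proof. by rewrite /stepw inordK. Qed.
Lemma stepw2 : stepw x y (inord 2 : 'I_3) = 1. Proof. by rewrite /stepw inordK. Qed.

Lemma Ppos_S m a b : Ppos x y m.+1 a b = (0 <= a)%R%:R *
  (Ppos x y m (a + 1) b + (x + y) * Ppos x y m a b + x * y * Ppos x y m (a - 1) b).
Proof.
rewrite PposE big_mkcond sum_fcons.
have E : forall s, \sum_(u : {ffun 'I_m -> 'I_3})
   (if (height a (fcons s u) m.+1 == b) && [forall j : 'I_m.+2, 0 <= height a (fcons s u) j]
    then pathw x y (fcons s u) else 0) = (0 <= a)%R%:R * (stepw x y s * Ppos x y m (a + step s) b).
  move=> s; rewrite PposE mulr_sumr [in RHS]big_mkcond mulr_sumr; apply: eq_bigr => u _.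
  rewrite heightS forall_fcons pathw_fcons.
  case Ha: (0 <= a)%R; rewrite ?mul1r ?mul0r ?andbF //=.
rewrite (eq_bigr _ (fun s _ => E s)) sum_I3.
rewrite step0 step1 step2 stepw0 stepw1 stepw2 addr0; ring.
Qed.

Lemma Pw_S m a b : Pw x y m.+1 a b =
  Pw x y m (a + 1) b + (x + y) * Pw x y m a b + x * y * Pw x y m (a - 1) b.
Proof.
rewrite PwE big_mkcond sum_fcons.
have E : forall s, \sum_(u : {ffun 'I_m -> 'I_3})
   (if height a (fcons s u) m.+1 == b then pathw x y (fcons s u) else 0)
   = stepw x y s * Pw x y m (a + step s) b.
  move=> s; rewrite PwE mulr_sumr [in RHS]big_mkcond; apply: eq_bigr => u _.
  rewrite heightS pathw_fcons.
  by case: ifP; rewrite ?mulr0.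
rewrite (eq_bigr _ (fun s _ => E s)) sum_I3.
rewrite step0 step1 step2 stepw0 stepw1 stepw2 addr0; ring.
Qed.

Lemma sum_ffun0 (F : {ffun 'I_0 -> 'I_3} -> R) c :
  (forall t, F t = c) -> \sum_t F t = c.
Proof.
move=> H; rewrite (eq_bigr (fun _ => c)) ?sumr_const //.
by rewrite card_ffun !card_ord expn0.
Qed.

Lemma pathw0 (t : {ffun 'I_0 -> 'I_3}) : pathw x y t = 1.
Proof. by rewrite pathwE big_ord0. Qed.

Lemma Ppos_0 a b : Ppos x y 0 a b = ((a == b) && (0 <= a)%R)%:R.
Proof.
rewrite PposE big_mkcond; apply: sum_ffun0 => t; rewrite height0 pathw0.
have -> : [forall j : 'I_1, 0 <= height a t j] = (0 <= a)%R.
  apply/forallP/idP => [H|Ha [[|j] Hj]]; first by have := H ord0; rewrite height0.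
    by rewrite height0.
  by [].
by case: ifP.
Qed.

Lemma Pw_0 a b : Pw x y 0 a b = (a == b)%:R.
Proof.
rewrite PwE big_mkcond; apply: sum_ffun0 => t; rewrite height0 pathw0.
by case: ifP.
Qed.

End Comb.

Section DP.
Variables (R : fieldType) (x y : R).

Definition guard (pos : bool) (a : int) : bool := if pos then (0 <= a)%R else true.

Definition Kop (pos : bool) (f : int -> R) : int -> R := fun a =>
  (guard pos a)%:R * (f (a + 1) + (x + y) * f a + x * y * f (a - 1)).

Definition ind (pos : bool) (c : int) : int -> R := fun a => (guard pos a && (c <= a)%R)%:R.

Definition Pg (pos : bool) m a b := if pos then Ppos x y m a b else Pw x y m a b.

Lemma Pg_S pos m a b : Pg pos m.+1 a b = Kop pos (fun a' => Pg pos m a' b) a.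
Proof. by case: pos; rewrite /Pg /Kop /guard ?Ppos_S ?Pw_S ?mul1r. Qed.

Lemma Pg_0 pos a b : Pg pos 0 a b = (guard pos a && (a == b))%:R.
Proof. by case: pos; rewrite /Pg /guard ?Ppos_0 ?Pw_0 // andbC. Qed.

Lemma Kop_eq pos f g a : f (a + 1) = g (a + 1) -> f a = g a -> f (a - 1) = g (a - 1) ->
  Kop pos f a = Kop pos g a.
Proof. by rewrite /Kop => -> -> ->. Qed.

Lemma Kop_lin pos N (c : 'I_N -> R) (F : 'I_N -> int -> R) a :
  Kop pos (fun a' => \sum_(i < N) c i * F i a') a = \sum_(i < N) c i * Kop pos (F i) a.
Proof.
rewrite /Kop !mulr_sumr -!big_split /= mulr_sumr; apply: eq_bigr => i _; ring.
Qed.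

Lemma Kop_sum pos N (F : 'I_N -> int -> R) a :
  Kop pos (fun a' => \sum_(i < N) F i a') a = \sum_(i < N) Kop pos (F i) a.
Proof.
rewrite /Kop !mulr_sumr -!big_split /= mulr_sumr; apply: eq_bigr => i _; ring.
Qed.

Lemma iter_lin pos m N (c : 'I_N -> R) (F : 'I_N -> int -> R) :
  iter m (Kop pos) (fun a' => \sum_(i < N) c i * F i a') =
  (fun a' => \sum_(i < N) c i * iter m (Kop pos) (F i) a').
Proof.
elim: m => [|m IH] //=; rewrite IH; apply: functional_extensionality => a.
exact: Kop_lin.
Qed.

Lemma sum_ind0 pos (c a : int) L : a < c + L%:Z ->
  \sum_(l < L) Pg pos 0 a (c + l%:Z) = ind pos c a.
Proof.
move=> H; rewrite /ind.
under eq_bigr => l _ do rewrite Pg_0.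
case: (guard pos a) => /=; last by rewrite big1.
elim: L H => [|L IH] H; first by rewrite big_ord0 (_ : (c <= a) = false) //; lia.
rewrite big_ord_recr /=.
case: (ltP a (c + L%:Z)) => Ha.
  rewrite IH // (_ : (a == c + L%:Z) = false) ?addr0 //; apply/negbTE/eqP; lia.
rewrite big1 ?add0r => [|i _]; last first.
  by rewrite (_ : (a == _) = false) //; apply/negbTE/eqP; case: i => /= i; lia.
have -> : (a == c + L%:Z) = true by apply/eqP; lia.
have -> // : (c <= a) = true by lia.
Qed.

Lemma sum_Pg pos m c L a : a + m%:Z < c + L%:Z ->
  \sum_(l < L) Pg pos m a (c + l%:Z) = iter m (Kop pos) (ind pos c) a.
Proof.
elim: m a => [|m IH] a H; first by apply: sum_ind0; lia.
under eq_bigr => l _ do rewrite Pg_S.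
rewrite -Kop_sum iterS; apply: Kop_eq; rewrite IH //; lia.
Qed.

End DP.

Section Poly.
Variables (R : fieldType) (x y : R).

Definition conv (f g : nat -> R) (d : nat) := \sum_(i < d.+1) f i * g (d - i)%N.

Lemma conv_sym f g d : conv f g d = conv g f d.
Proof.
rewrite /conv (reindex_inj rev_ord_inj) /=; apply: eq_bigr => i _.
by rewrite subSS subKn 1?mulrC // -ltnS.
Qed.

Lemma conv_pascal (a' a h : nat -> R) (z : R) :
  a' 0%N = a 0%N -> (forall i, a' i.+1 = a i.+1 + z * a' i) ->
  forall d, conv a' h d.+1 = conv a h d.+1 + z * conv a' h d.
Proof.
move=> H0 HS d; rewrite /conv big_ord_recl [in X in _ = X + _]big_ord_recl H0 -addrA.
congr (_ + _); rewrite mulr_sumr -big_split /=; apply: eq_bigr => i _.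
by rewrite /bump leq0n add1n subSS HS mulrDl mulrA.
Qed.

Lemma conv0 f g : conv f g 0 = f 0%N * g 0%N.
Proof. by rewrite /conv big_ord_recl big_ord0 addr0. Qed.

Lemma wrec (a' a b' b : nat -> R) :
  a' 0%N = a 0%N -> (forall i, a' i.+1 = a i.+1 + x * a' i) ->
  b' 0%N = b 0%N -> (forall i, b' i.+1 = b i.+1 + y * b' i) ->
  [/\ conv a' b' 0 = conv a b 0,
      conv a' b' 1 - (x + y) * conv a' b' 0 = conv a b 1 &
      forall d, conv a' b' d.+2 - (x + y) * conv a' b' d.+1 + x * y * conv a' b' d
                = conv a b d.+2].
Proof.
move=> Ha0 HaS Hb0 HbS.
have P1 := conv_pascal b' Ha0 HaS.
have P2 d : conv a b' d.+1 = conv a b d.+1 + y * conv a b' d.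
  by rewrite conv_sym (conv_pascal a Hb0 HbS) !(conv_sym a).
have E0 : conv a' b' 0 = conv a b 0 by rewrite !conv0 Ha0 Hb0.
have M0 : conv a b' 0 = conv a b 0 by rewrite !conv0 Hb0.
split => // [|d].
  rewrite P1 P2 E0 M0; ring.
rewrite !P1 P2; ring.
Qed.

Definition delta (i : nat) : R := (i == 0%N)%:R.
Definition Aseq (t i : nat) : R := 'C(i + t, t)%:R * x ^+ i.
Definition Bseq (t i : nat) : R := 'C(i + t, t)%:R * y ^+ i.
Definition Aprev t := if t is t'.+1 then Aseq t' else delta.
Definition Bprev t := if t is t'.+1 then Bseq t' else delta.

Lemma Apascal (z : R) t :
  let S := fun i => 'C(i + t, t)%:R * z ^+ i in
  let P := fun i => if t is t'.+1 then 'C(i + t', t')%:R * z ^+ i else delta i in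
  S 0%N = P 0%N /\ forall i, S i.+1 = P i.+1 + z * S i.
Proof.
case: t => [|t] /=; split.
- by rewrite /delta /= mulr1.
- by move=> i; rewrite !addn0 !bin0 /delta /= add0r exprS !mul1r.
- by rewrite !add0n !binn.
- move=> i; rewrite addSn binS natrD mulrDl addnS addrC; congr (_ + _).
  by rewrite exprS mulrCA.
Qed.

Definition wn (d t : nat) := conv (Aseq t) (Bseq t) d.
Definition wz (d : int) (t : nat) := if d is Posz d' then wn d' t else 0.

Lemma wz_neg d t : d < 0 -> wz d t = 0.
Proof. by case: d. Qed.

Lemma wn_prev t : let W := fun d => conv (Aseq t) (Bseq t) d in
  let V := fun d => conv (Aprev t) (Bprev t) d in
  [/\ W 0%N = V 0%N, W 1%N - (x + y) * W 0%N = V 1%N &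
      forall d, W d.+2 - (x + y) * W d.+1 + x * y * W d = V d.+2].
Proof.
have [A0 AS] := Apascal x t; have [B0 BS] := Apascal y t.
by apply: wrec; case: t A0 AS B0 BS.
Qed.

Lemma wz_rec t (d : int) :
  wz d t - (x + y) * wz (d - 1) t + x * y * wz (d - 2) t =
  if t is t'.+1 then wz d t' else (d == 0)%:R.
Proof.
have [V0 V1 V2] := wn_prev t.
have Vt d' : conv (Aprev t) (Bprev t) d' = if t is t'.+1 then wz d' t' else (d' == 0%N)%:R.
  case: t {V0 V1 V2} => [|t] //=.
  rewrite /conv big_ord_recl big1 => [|i _]; last by rewrite /delta /= mul0r.
  by rewrite /delta subn0 addr0; case: d' => [|d'] /=; rewrite ?mulr1 ?mulr0.
case: d => [d|d]; last first.
  rewrite !wz_neg ?mulr0 ?subr0 ?addr0 //; try lia.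
  by case: t {Vt V0 V1 V2}.
case: d => [|[|d]].
- rewrite (wz_neg (d := 0 - 1)) // (wz_neg (d := 0 - 2)) // !mulr0 subr0 addr0.
  by rewrite /= /wn V0 Vt; case: t {V0 V1 V2 Vt}.
- rewrite (wz_neg (d := 1 - 2)) // mulr0 addr0 (_ : Posz 1 - 1 = Posz 0) //.
  by rewrite /= /wn V1 Vt; case: t {V0 V1 V2 Vt}.
- rewrite (_ : Posz d.+2 - 1 = Posz d.+1); last by lia.
  rewrite (_ : Posz d.+2 - 2 = Posz d); last by lia.
  by rewrite /= /wn V2 Vt; case: t {V0 V1 V2 Vt}.
Qed.

Definition e (n t : nat) : R :=
  (-1) ^+ (n + t) * (wz (n%:Z - 1 - t%:Z) t + wz (n%:Z - t%:Z) t).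

Lemma e_gt n t : (n < t)%N -> e n t = 0.
Proof. by move=> H; rewrite /e !wz_neg ?addr0 ?mulr0 //; lia. Qed.

Lemma e_recS m t : e m.+2 t.+1 =
  e m.+1 t - (x + y) * e m.+1 t.+1 - x * y * e m t.+1.
Proof.
rewrite /e.
set D := m%:Z - t%:Z.
rewrite (_ : m.+2%:Z - 1 - t.+1%:Z = D); last by rewrite /D; lia.
rewrite (_ : m.+2%:Z - t.+1%:Z = D + 1); last by rewrite /D; lia.
rewrite (_ : m.+1%:Z - 1 - t%:Z = D); last by rewrite /D; lia.
rewrite (_ : m.+1%:Z - t%:Z = D + 1); last by rewrite /D; lia.
rewrite (_ : m.+1%:Z - 1 - t.+1%:Z = D - 1); last by rewrite /D; lia.
rewrite (_ : m%:Z - 1 - t.+1%:Z = D - 2); last by rewrite /D; lia.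
rewrite (_ : m%:Z - t.+1%:Z = D - 1); last by rewrite /D; lia.
have R1 := wz_rec t.+1 D; have R2 := wz_rec t.+1 (D + 1).
rewrite (_ : D + 1 - 1 = D) in R2; last by lia.
rewrite (_ : D + 1 - 2 = D - 1) in R2; last by lia.
rewrite -R1 -R2 !addnS !addSn !exprS; ring.
Qed.

Lemma e_rec0 m : e m.+2 0 = - (x + y) * e m.+1 0 - x * y * e m 0.
Proof.
rewrite /e !subr0 !addn0.
set D := m%:Z.
rewrite (_ : m.+2%:Z - 1 = D + 1); last by rewrite /D; lia.
rewrite (_ : m.+2%:Z = D + 2); last by rewrite /D; lia.
rewrite (_ : m.+1%:Z - 1 = D); last by rewrite /D; lia.
have R1 := wz_rec 0 (D + 1); have R2 := wz_rec 0 (D + 2).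
rewrite (_ : D + 1 - 1 = D) in R1; last by lia.
rewrite (_ : D + 1 - 2 = D - 1) in R1; last by lia.
rewrite (_ : D + 2 - 1 = D + 1) in R2; last by lia.
rewrite (_ : D + 2 - 2 = D) in R2; last by lia.
rewrite (_ : (D + 1 == 0) = false) in R1; last by apply/negbTE/eqP; rewrite /D; lia.
rewrite (_ : (D + 2 == 0) = false) in R2; last by apply/negbTE/eqP; rewrite /D; lia.
have E1 : wz (D + 1) 0 = (x + y) * wz D 0 - x * y * wz (D - 1) 0.
  by apply: subr0_eq; rewrite -[X in _ = X]/(false%:R) -R1; ring.
have E2 : wz (D + 2) 0 = (x + y) * wz (D + 1) 0 - x * y * wz D 0.
  by apply: subr0_eq; rewrite -[X in _ = X]/(false%:R) -R2; ring.
rewrite E2 E1 !exprS; ring.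
Qed.

End Poly.

Ltac decle := repeat match goal with |- context [(?u <= ?v)%R] =>
  (rewrite (_ : (u <= v)%R = true); last by lia) ||
  (rewrite (_ : (u <= v)%R = false); last by lia) end.

Section Psi.
Variables (R : fieldType) (x y : R).

Definition phi t := iter t (Kop x y true) (ind R true 0).

Lemma Kop_comb pos (al be : R) f g a :
  Kop x y pos (fun b => al * f b + be * g b) a = al * Kop x y pos f a + be * Kop x y pos g a.
Proof. rewrite /Kop; ring. Qed.

Lemma phiS t a : phi t.+1 a = Kop x y true (phi t) a.
Proof. by []. Qed.

Lemma e00 : e x y 0 0 = 1.
Proof. by rewrite /e /= !addn0 expr0 mul1r add0r /wn conv0 /Aseq /Bseq !bin0 !mulr1. Qed.

Lemma enn n : e x y n n = 1.
Proof.
rewrite /e wz_neg; last by lia.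
rewrite subrr add0r /= /wn conv0 /Aseq /Bseq /= add0n binn !mulr1 addnn.
by rewrite -mul2n exprM sqrrN !expr1n.
Qed.

Lemma e_sub m : e x y m.+1 m = - 1 - (m.+1)%:R * (x + y).
Proof.
rewrite /e (_ : m.+1%:Z - 1 - m%:Z = 0); last by lia.
rewrite (_ : m.+1%:Z - m%:Z = 1); last by lia.
rewrite /= /wn /conv !big_ord_recl !big_ord0 /Aseq /Bseq /= !addr0.
rewrite /bump /= !subn0 !add0n add1n binn binSn.
rewrite addSn addnn exprS -mul2n exprM sqrrN !expr1n.
ring.
Qed.

Lemma phi_neg t a : a < 0 -> phi t a = 0.
Proof.
move=> Ha; case: t => [|t]; rewrite /phi /= ?/Kop /ind /guard; decle; by rewrite ?mul0r.
Qed.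

Lemma sum_widen n N a : (n < N)%N ->
  \sum_(t < n.+1) e x y n t * phi t a = \sum_(t < N) e x y n t * phi t a.
Proof.
move=> H; rewrite (big_ord_widen N (fun t => e x y n t * phi t a) H) big_mkcond /=.
apply: eq_bigr => i _; case: ifP => // Hi.
by rewrite e_gt ?mul0r //; move/negbT: Hi; rewrite -leqNgt.
Qed.

Lemma Psi_all n : (forall a, \sum_(t < n.+1) e x y n t * phi t a = (x * y) ^+ n * ind R true n%:Z a) /\
  (forall a, \sum_(t < n.+2) e x y n.+1 t * phi t a = (x * y) ^+ n.+1 * ind R true n.+1%:Z a).
Proof.
elim: n => [|n [IH0 IH1]].
  split => a.
    by rewrite big_ord1 e00 /phi /=; ring.
  rewrite big_ord_recr big_ord1 /= (e_sub 0) (enn 1) mul1r.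
  rewrite /Kop /phi /= /ind /guard.
  have [Ha|Ha] := ltP a 0; first by decle; rewrite /=; ring.
  have [Ha1|Ha1] := ltP a 1; decle; rewrite /=; ring.
split => // a.
have W1 := @sum_widen (n.+1) (n.+3) a ltac:(lia).
have W0 := @sum_widen n (n.+3) a ltac:(lia).
rewrite IH1 big_ord_recl in W1; rewrite IH0 big_ord_recl in W0.
have K1 : Kop x y true (fun b => (x * y) ^+ n.+1 * ind R true n.+1%:Z b) a =
    \sum_(t < n.+2) e x y n.+1 t * Kop x y true (phi t) a.
  rewrite -Kop_lin.
  by congr Kop; apply: functional_extensionality => b; rewrite IH1.
have E1 : \sum_(i < n.+2) e x y n.+1 (lift ord0 i) * phi (lift ord0 i) a =
          \sum_(i < n.+2) e x y n.+1 i.+1 * Kop x y true (phi i) a.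
  by apply: eq_bigr => i _; rewrite lift0 phiS.
have E0 : \sum_(i < n.+2) e x y n (lift ord0 i) * phi (lift ord0 i) a =
          \sum_(i < n.+2) e x y n i.+1 * Kop x y true (phi i) a.
  by apply: eq_bigr => i _; rewrite lift0 phiS.
have P0 : phi 0 a = ind R true 0 a by [].
have O : nat_of_ord (@ord0 n.+2) = 0%N by [].
rewrite E1 O in W1; rewrite E0 O in W0.
change (phi 0 a) with (ind R true 0 a) in W1; change (phi 0 a) with (ind R true 0 a) in W0.
rewrite big_ord_recl O e_rec0.
under eq_bigr => t _ do rewrite lift0 e_recS !mulrBl phiS.
rewrite !big_split /=.
change (phi 0 a) with (ind R true 0 a).
have -> : \sum_(i < n.+2) - ((x + y) * e x y n.+1 i.+1 * Kop x y true (phi i) a) =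
   - ((x + y) * \sum_(i < n.+2) e x y n.+1 i.+1 * Kop x y true (phi i) a).
  by rewrite sumrN mulr_sumr; congr (- _); apply: eq_bigr => i _; rewrite mulrA.
have -> : \sum_(i < n.+2) - (x * y * e x y n i.+1 * Kop x y true (phi i) a) =
   - (x * y * \sum_(i < n.+2) e x y n i.+1 * Kop x y true (phi i) a).
  by rewrite sumrN mulr_sumr; congr (- _); apply: eq_bigr => i _; rewrite mulrA.
rewrite -K1.
have -> : \sum_(i < n.+2) e x y n.+1 i.+1 * Kop x y true (phi i) a =
   (x * y) ^+ n.+1 * ind R true n.+1%:Z a - e x y n.+1 0 * ind R true 0 a by rewrite W1; ring.
have -> : \sum_(i < n.+2) e x y n i.+1 * Kop x y true (phi i) a =
   (x * y) ^+ n * ind R true n%:Z a - e x y n 0 * ind R true 0 a by rewrite W0; ring.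
rewrite /Kop /ind /guard.
have [Ha|Ha] := ltP a 0; decle; rewrite /= ?andbF /= !exprS.
  ring.
have -> : (n.+1%:Z <= a + 1) = (n%:Z <= a) by apply/idP/idP; lia.
have -> : (0 <= a - 1) && (n.+1%:Z <= a - 1) = (n.+2%:Z <= a).
  by apply/andP/idP => [[]|]; lia.
by case: (n%:Z <= a); case: (n.+1%:Z <= a); case: (n.+2%:Z <= a); rewrite /=; ring.
Qed.

End Psi.

Section Fin.
Variables (R : fieldType) (x y : R).

Lemma expzP (z : R) k : z ^ (Posz k) = z ^+ k.
Proof. by []. Qed.

Lemma binsum M j L : (j <= M)%N -> (M < L)%N ->
  \sum_(j <= l < L) binz R l%:Z j * binz R (M%:Z + j%:Z - l%:Z) j * x ^+ (l - j) * y ^ (M%:Z - l%:Z)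
  = wn x y (M - j) j.
Proof.
move=> HjM HML.
rewrite (big_cat_nat _ (n := M.+1)) //; last by apply: leqW.
rewrite [X in _ + X = _]big1_seq ?addr0; last first.
  move=> l /andP[_]; rewrite mem_index_iota => /andP[H1 H2]; rewrite /binz.
  case E: (M%:Z + j%:Z - l%:Z) => [k|k]; last by rewrite mulr0 !mul0r.
  by rewrite (@bin_small k j) ?mulr0 ?mul0r //; lia.
rewrite -[X in \sum_(X <= _ < _) _](add0n j) big_addn big_mkord subSn //.
rewrite /wn /conv; apply: eq_bigr => i _.
have Hi := ltn_ord i.
rewrite /binz (_ : M%:Z + j%:Z - (i + j)%N%:Z = Posz (M - i)); last by lia.
rewrite (_ : M%:Z - (i + j)%N%:Z = Posz (M - j - i)); last by lia.
rewrite addnK /Aseq /Bseq (_ : (M - j - i + j = M - i)%N); last by lia.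
by rewrite expzP; ring.
Qed.

Lemma xyAlast n j : x != 0 -> y != 0 -> (j < n.-1)%N -> x * y * Alast x y n j = e x y n j.
Proof.
move=> Hx Hy; case: n => [|m] //= Hj.
rewrite /Alast /e big_split /=.
have E1 : \sum_(j <= l < m.+2) binz R l%:Z j * binz R (m.+1%:Z + j%:Z - 1 - l%:Z) j *
      x ^+ (l - j) * y ^ (m.+1%:Z - 1 - l%:Z) =
   \sum_(j <= l < m.+2) binz R l%:Z j * binz R (m%:Z + j%:Z - l%:Z) j *
      x ^+ (l - j) * y ^ (m%:Z - l%:Z).
  apply: eq_bigr => l _.
  by rewrite (_ : m.+1%:Z + j%:Z - 1 - l%:Z = m%:Z + j%:Z - l%:Z) 1?(_ : m.+1%:Z - 1 - l%:Z = m%:Z - l%:Z) //; lia.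
rewrite E1 !binsum //; try lia.
rewrite (_ : m.+1%:Z - 1 - j%:Z = Posz (m - j)); last by lia.
rewrite (_ : m.+1%:Z - j%:Z = Posz (m.+1 - j)); last by lia.
rewrite /=; field.
by rewrite Hx Hy.
Qed.

End Fin.

Section Main.
Variables (R : fieldType) (x y : R).

Lemma Pg_iter pos m a b :
  Pg x y pos m a b = iter m (Kop x y pos) (fun a' => Pg x y pos 0 a' b) a.
Proof.
elim: m a => [|m IH] a //=; rewrite Pg_S; congr (Kop x y pos _ a).
by apply: functional_extensionality => c; exact: IH.
Qed.

Definition D i a := iter i (Kop x y true) (fun a' => Pg x y true 0 a' 0) a.

Lemma PposD m a : Ppos x y m a 0 = D m a.
Proof. exact: (Pg_iter true). Qed.

Lemma Kop_comb' pos (al be : R) f g a :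
  Kop x y pos (fun b => al * f b + be * g b) a = al * Kop x y pos f a + be * Kop x y pos g a.
Proof. rewrite /Kop; ring. Qed.

Lemma iter_comb pos m (al be : R) f g :
  iter m (Kop x y pos) (fun b => al * f b + be * g b) =
  (fun b => al * iter m (Kop x y pos) f b + be * iter m (Kop x y pos) g b).
Proof.
elim: m => [|m IH] //=; rewrite IH; apply: functional_extensionality => a.
exact: Kop_comb'.
Qed.

Lemma psi i a : (1 + x) * (1 + y) * phi x y i a - phi x y i.+1 a = x * y * D i a.
Proof.
elim: i a => [|i IH] a.
  rewrite /phi /D /= /Kop Ppos_0 /ind /guard.
  have [Ha|Ha] := ltP a 0.
    have -> : (a == 0) = false by apply/negbTE/eqP; lia.
    decle; rewrite /=; ring.
  have [Ha1|Ha1] := ltP a 1.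
    have -> : a = 0 by lia.
    by rewrite /=; ring.
  decle; rewrite (_ : (a == 0) = false) /=; last by apply/negbTE/eqP; lia.
  ring.
have -> : x * y * D i.+1 a = Kop x y true (fun b => x * y * D i b + 0 * D i b) a.
  by rewrite Kop_comb'; rewrite mul0r addr0.
have -> : (fun b => x * y * D i b + 0 * D i b) =
   (fun b => (1 + x) * (1 + y) * phi x y i b + (-1) * phi x y i.+1 b).
  by apply: functional_extensionality => b; rewrite -IH; ring.
rewrite Kop_comb' -!phiS; ring.
Qed.

Lemma chi_van m n a : a + m%:Z < n%:Z -> iter m (Kop x y false) (ind R false n%:Z) a = 0.
Proof.
elim: m a => [|m IH] a H /=.
  by rewrite /ind /guard; decle.
rewrite /Kop /guard !IH; try lia. by rewrite !mulr0 !addr0 mulr0.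
Qed.

Lemma chi_pos m n a : (m <= n)%N -> iter m (Kop x y true) (ind R true n%:Z) a =
   (0 <= a)%R%:R * iter m (Kop x y false) (ind R false n%:Z) a.
Proof.
elim: m a => [|m IH] a H /=.
  by rewrite /ind /guard; case: (0 <= a)%R; rewrite /= ?mul1r ?mul0r.
rewrite /Kop /guard !IH; try lia.
have [Ha|Ha] := ltP a 0; first by decle; rewrite /=; ring.
have [Ha1|Ha1] := ltP a 1.
  have -> : a = 0 by lia.
  rewrite (chi_van (a := 0 - 1)) /=; last by lia.
  ring.
by decle; rewrite /=; ring.
Qed.

Lemma chi_shift m f s a : iter m (Kop x y false) f (a + s) =
  iter m (Kop x y false) (fun b => f (b + s)) a.
Proof.
elim: m a => [|m IH] a //=.
by rewrite /Kop /guard (addrAC a s 1) (addrAC a s (-1)) !IH.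
Qed.

End Main.

Section Main2.
Variables (R : fieldType) (x y : R).

Lemma MPE m (k : nat) : sumPpos x y m k%:Z 0 = phi x y m k%:Z.
Proof.
transitivity (\sum_(l < (m + `|k%:Z - 0|).+1) Pg x y true m k%:Z (0 + l%:Z)); first by [].
by apply: sum_Pg; lia.
Qed.

Lemma CPE j (n k : nat) : sumPw x y j.+1 0 (n%:Z - k%:Z) =
  iter j.+1 (Kop x y false) (ind R false (n%:Z - k%:Z)) 0.
Proof.
transitivity (\sum_(l < (j.+1 + `|(0 - (n%:Z - k%:Z))%R|).+1) Pg x y false j.+1 0 ((n%:Z - k%:Z) + l%:Z)); first by [].
by apply: sum_Pg; lia.
Qed.

Lemma chiE j (n k : nat) : (j < n)%N ->
  iter j.+1 (Kop x y true) (ind R true n%:Z) k%:Z = sumPw x y j.+1 0 (n%:Z - k%:Z).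
Proof.
move=> H; rewrite chi_pos // (_ : (0 <= k%:Z)%R = true) // mul1r CPE.
rewrite -[k%:Z]add0r chi_shift; congr (iter _ _ _ _).
apply: functional_extensionality => b; rewrite /ind /guard /=.
by rewrite (_ : (n%:Z <= b + k%:Z) = (n%:Z - (0 + k%:Z) <= b)) //; apply/idP/idP; lia.
Qed.

End Main2.

Theorem lemma12 (R : fieldType) (x y : R) (n k : nat) :
  x != 0 -> y != 0 -> (1 <= n)%N ->
  Amx x y n *m MP1 x y n k = M1 x y n k + C1 x y n k.
Proof.
move=> Hx Hy Hn.
have Hxy : x * y != 0 by rewrite mulf_neq0.
case: n Hn => [|m] // _.
apply/matrixP => i j; rewrite !mxE.
have phiD t : phi x y (t + j).+1 k%:Z = iter j.+1 (Kop x y true) (phi x y t) k%:Z.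
  by rewrite /phi -iterD (_ : (j.+1 + t = (t + j).+1)%N) //; lia.
under eq_bigr => t _ do rewrite [MP1 x y m.+1 k t j]mxE MPE phiD.
have L := @iter_lin R x y true j.+1 m.+1 (fun t : 'I_m.+1 => Amx x y m.+1 i t)
   (fun t : 'I_m.+1 => phi x y t).
have := congr1 (fun f => f k%:Z) L; rewrite /= => <-.
rewrite PposD.
have [Hi|Hi] := ltnP i m.
  have G : (fun a => \sum_(t < m.+1) Amx x y m.+1 i t * phi x y t a) = D x y i.
    apply: functional_extensionality => a.
    have Hi1 : (i.+1 < m.+1)%N by lia.
    pose i1 : 'I_m.+1 := Ordinal Hi1.
    rewrite (bigD1 i) // (bigD1 i1) /=; last by apply/eqP => /(congr1 val) /=; lia.
    rewrite big1 ?addr0 => [|t /andP[Ht1 Ht2]]; last first.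
      have h1 : (i : nat) <> t by move=> E; move/eqP: Ht1; apply; apply: val_inj.
      have h2 : (i.+1 : nat) <> t by move=> E; move/eqP: Ht2; apply; apply: val_inj.
      rewrite mxE /= (_ : (i == t :> nat) = false); last by apply/eqP.
      rewrite (_ : (i.+1 == t :> nat) = false); last by apply/eqP.
      by rewrite (_ : (i == m :> nat) = false) ?mul0r //; apply/eqP; lia.
    rewrite !mxE /= eqxx Hi /= (_ : (i == i.+1 :> nat) = false); last by apply/eqP; lia.
    rewrite /=.
    rewrite eqxx /= -phiS -[D x y i a](mulKf Hxy) -psi; field.
    by rewrite Hx Hy.
  rewrite G /D addr0 (_ : ((i + j).+1 = j.+1 + i)%N) ?iterD //; lia.
have Eim : i = ord_max by apply: val_inj => /=; have := ltn_ord i; lia.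
subst i.
have G : forall a, \sum_(t < m.+1) Amx x y m.+1 ord_max t * phi x y t a =
    1 * D x y m a + (x * y) ^+ m * ind R true m.+1%:Z a.
  move=> a; apply: (mulfI Hxy).
  rewrite mulr_sumr big_ord_recr /=.
  have E1 : \sum_(t < m) x * y * (Amx x y m.+1 ord_max (widen_ord (leqnSn m) t) * phi x y t a)
     = \sum_(t < m) e x y m.+1 t * phi x y t a.
    apply: eq_bigr => t _; rewrite mxE /=.
    have Ht := ltn_ord t.
    rewrite (_ : (m == t :> nat) = false); last by apply/eqP; lia.
    rewrite (_ : (m.+1 == t :> nat) = false); last by apply/eqP; lia.
    rewrite (_ : (t == m :> nat) = false) ?andbF; last by apply/eqP; lia.
    by rewrite eqxx Ht /= mulrA xyAlast.
  rewrite E1 mxE /= ltnn eqxx /= (_ : (m.+1 == m :> nat) = false); last by apply/eqP; lia.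
  have P := (Psi_all x y m).2 a.
  rewrite big_ord_recr big_ord_recr /= (e_sub x y m) (enn x y m.+1) in P.
  have -> : \sum_(t < m) e x y m.+1 t * phi x y t a =
     (x * y) ^+ m.+1 * ind R true m.+1%:Z a - (-1 - m.+1%:R * (x + y)) * phi x y m a
       - 1 * phi x y m.+1 a.
  by rewrite -P -phiS; ring.
  have Ps := psi x y m a.
  rewrite /= mul1r -[D x y m a](mulKf Hxy) -Ps.
  rewrite exprS -phiS; field; by rewrite Hx Hy.
have -> : (fun a => \sum_(t < m.+1) Amx x y m.+1 ord_max t * phi x y t a) =
    (fun a => 1 * D x y m a + (x * y) ^+ m * ind R true m.+1%:Z a).
  by apply: functional_extensionality => a; rewrite G.
rewrite iter_comb Kop_comb' mul1r -!iterS chiE ?ltn_ord //.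
congr (_ + _).
by rewrite /D /= addnC iterD.
Qed.
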